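(* Let $f:A\to B$ be a morphism in $\mathbf{Gpd}^{\mathbf{G}}$. The following are equivalent: (i) $f$ is a trivial cofibration for the projective model structure on $\mathbf{Gpd}^{\mathbf{G}}$; (ii) $f$ is a levelwise trivial cofibration (i.e. its underlying functor of groupoids is injective on objects and an equivalence of groupoids) and $f$ induces a bijection between the set of fixed points of $A$ and the set of fixed points of $B$; (iii) $f$ is a levelwise trivial cofibration and $f$ induces an isomorphism of groupoids $A^{\mathbf{G}}\cong B^{\mathbf{G}}$; (iv) $f$ is a levelwise trivial cofibration and $f$ induces an isomorphism of groupoids $A_{\mathbf{f}}\cong B_{\mathbf{f}}$.
   Context: $\mathbf{Gpd}$ is the category of (small) groupoids with its natural model structure: weak equivalences are equivalences of groupoids, fibrations are isofibrations, cofibrations are functors injective on objects. $\mathbf{G}$ denotes the one-object groupoid $\mathbf{B}(\mathbb{Z}/2\mathbb{Z})$, and $\mathbf{Gpd}^{\mathbf{G}}$ is the functor category $[\mathbf{B}(\mathbb{Z}/2\mathbb{Z})^{op},\mathbf{Gpd}]$, i.e. groupoids equipped with an involution and functors commuting with the involutions. The projective model structure on $\mathbf{Gpd}^{\mathbf{G}}$: a morphism is a weak equivalence (resp. fibration) iff its underlying functor of groupoids is an equivalence (resp. isofibration); cofibrations are the morphisms with the left lifting property against trivial fibrations. For a groupoid $A$ with involution $\alpha$, a fixed point is an object $x$ with $\alpha(x)=x$; $A_{\mathbf{f}}$ is the full subgroupoid of $A$ on the fixed points, and $A^{\mathbf{G}}$ is the subgroupoid consisting of fixed points and fixed morphisms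 (morphisms $h$ with $\alpha(h)=h$). *)

(* Defs.v *)
(** Small (strict) groupoids, presented by a type of objects and a type of
    arrows with source/target maps.  [comp g h] is "g after h", meaningful
    when [tgt h = src g]. *)
Record Gpd : Type := {
  ob : Type;
  ar : Type;
  src : ar -> ob;
  tgt : ar -> ob;
  idn : ob -> ar;
  comp : ar -> ar -> ar;
  inv : ar -> ar;
  src_idn : forall x, src (idn x) = x;
  tgt_idn : forall x, tgt (idn x) = x;
  src_comp : forall g h, tgt h = src g -> src (comp g h) = src h;
  tgt_comp : forall g h, tgt h = src g -> tgt (comp g h) = tgt g;
  comp_idr : forall f, comp f (idn (src f)) = f;
  comp_idl : forall f, comp (idn (tgt f)) f = f;
  comp_assoc : forall f g h, tgt h = src g -> tgt g = src f ->
     comp f (comp g h) = comp (comp f g) h;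
  src_inv : forall f, src (inv f) = tgt f;
  tgt_inv : forall f, tgt (inv f) = src f;
  comp_invl : forall f, comp (inv f) f = idn (src f);
  comp_invr : forall f, comp f (inv f) = idn (tgt f)
}.

Arguments src {_} _.
Arguments tgt {_} _.
Arguments idn {_} _.
Arguments comp {_} _ _.
Arguments inv {_} _.

Record Functor (A B : Gpd) : Type := {
  fo : ob A -> ob B;
  fa : ar A -> ar B;
  fa_src : forall h, src (fa h) = fo (src h);
  fa_tgt : forall h, tgt (fa h) = fo (tgt h);
  fa_idn : forall x, fa (idn x) = idn (fo x);
  fa_comp : forall g h, tgt h = src g -> fa (comp g h) = comp (fa g) (fa h)
}.

Arguments fo {A B} _ _.
Arguments fa {A B} _ _.

(** Objects of Gpd^G = [B(Z/2)^op, Gpd]: groupoids with a (strict) involution. *)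
Record GpdG : Type := {
  gpd :> Gpd;
  alpha : Functor gpd gpd;
  alpha_invol_o : forall x, fo alpha (fo alpha x) = x;
  alpha_invol_a : forall h, fa alpha (fa alpha h) = h
}.

Arguments alpha {_}.

Record GMor (A B : GpdG) : Type := {
  gfun :> Functor A B;
  gfun_o : forall x, fo gfun (fo alpha x) = fo alpha (fo gfun x);
  gfun_a : forall h, fa gfun (fa alpha h) = fa alpha (fa gfun h)
}.

Arguments gfun {A B} _.

Definition fully_faithful {A B : Gpd} (F : Functor A B) : Prop :=
  (forall h h' : ar A, src h = src h' -> tgt h = tgt h' ->
      fa F h = fa F h' -> h = h') /\
  (forall (x y : ob A) (g : ar B), src g = fo F x -> tgt g = fo F y ->
      exists h : ar A, src h = x /\ tgt h = y /\ fa F h = g).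

Definition ess_surj {A B : Gpd} (F : Functor A B) : Prop :=
  forall b : ob B, exists (a : ob A) (g : ar B), src g = fo F a /\ tgt g = b.

Definition is_equivalence {A B : Gpd} (F : Functor A B) : Prop :=
  fully_faithful F /\ ess_surj F.

Definition is_isofibration {A B : Gpd} (F : Functor A B) : Prop :=
  forall (a : ob A) (g : ar B), src g = fo F a ->
    exists h : ar A, src h = a /\ fa F h = g.

Definition inj_on_objects {A B : Gpd} (F : Functor A B) : Prop :=
  forall x y : ob A, fo F x = fo F y -> x = y.

Definition weq {A B : GpdG} (f : GMor A B) : Prop := is_equivalence (gfun f).
Definition fibration {A B : GpdG} (f : GMor A B) : Prop := is_isofibration (gfun f).
Definition trivial_fibration {A B : GpdG} (f : GMor A B) : Prop :=
  weq f /\ fibration f.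

(** Left lifting property of f against p, in Gpd^G (equalities of functors
    are pointwise on objects and arrows). *)
Definition llp {A B X Y : GpdG} (f : GMor A B) (p : GMor X Y) : Prop :=
  forall (u : GMor A X) (v : GMor B Y),
    (forall a, fo p (fo u a) = fo v (fo f a)) ->
    (forall h, fa p (fa u h) = fa v (fa f h)) ->
    exists l : GMor B X,
      (forall a, fo l (fo f a) = fo u a) /\
      (forall h, fa l (fa f h) = fa u h) /\
      (forall b, fo p (fo l b) = fo v b) /\
      (forall k, fa p (fa l k) = fa v k).

Definition cofibration {A B : GpdG} (f : GMor A B) : Prop :=
  forall (X Y : GpdG) (p : GMor X Y), trivial_fibration p -> llp f p.

Definition trivial_cofibration {A B : GpdG} (f : GMor A B) : Prop :=
  cofibration f /\ weq f.

Definition levelwise_trivial_cofibration {A B : GpdG} (f : GMor A B) : Prop :=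
  inj_on_objects (gfun f) /\ is_equivalence (gfun f).

Definition fixed_ob {A : GpdG} (x : ob A) : Prop := fo alpha x = x.
Definition fixed_ar {A : GpdG} (h : ar A) : Prop := fa alpha h = h.

Definition bij_fixed_points {A B : GpdG} (f : GMor A B) : Prop :=
  (forall x y : ob A, fixed_ob x -> fixed_ob y -> fo f x = fo f y -> x = y) /\
  (forall b : ob B, fixed_ob b -> exists a : ob A, fixed_ob a /\ fo f a = b).

(** f induces an isomorphism A^G ~= B^G (subgroupoid of fixed points and
    fixed arrows): the restricted functor is bijective on objects and arrows. *)
Definition iso_homotopy_fixed {A B : GpdG} (f : GMor A B) : Prop :=
  bij_fixed_points f /\
  (forall h h' : ar A, fixed_ar h -> fixed_ar h' -> fa f h = fa f h' -> h = h') /\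
  (forall k : ar B, fixed_ar k -> exists h : ar A, fixed_ar h /\ fa f h = k).

(** f induces an isomorphism A_f ~= B_f (full subgroupoid on fixed points). *)
Definition iso_full_fixed {A B : GpdG} (f : GMor A B) : Prop :=
  bij_fixed_points f /\
  (forall h h' : ar A, fixed_ob (src h) -> fixed_ob (tgt h) ->
      fixed_ob (src h') -> fixed_ob (tgt h') -> fa f h = fa f h' -> h = h') /\
  (forall k : ar B, fixed_ob (src k) -> fixed_ob (tgt k) ->
      exists h : ar A, fixed_ob (src h) /\ fixed_ob (tgt h) /\ fa f h = k).

(* Main.v *)
Require Import Defs.
From Stdlib Require Import Classical ClassicalEpsilon ProofIrrelevance FunctionalExtensionality PropExtensionality Bool.

Definition cgpd (S : Type) : Gpd.
Proof.
  refine (Build_Gpd S (S * S) fst snd (fun x => (x, x))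
           (fun g h => (fst h, snd g)) (fun f => (snd f, fst f)) _ _ _ _ _ _ _ _ _ _ _);
  intros; repeat match goal with p : (_ * _)%type |- _ => destruct p end; reflexivity.
Defined.

Definition cfun {A : Gpd} {S : Type} (g : ob A -> S) : Functor A (cgpd S).
Proof.
  refine (Build_Functor A (cgpd S) g (fun h => (g (src h), g (tgt h))) _ _ _ _).
  - intros; reflexivity.
  - intros; reflexivity.
  - intros; simpl; rewrite src_idn, tgt_idn; reflexivity.
  - intros g0 h H; simpl; rewrite src_comp, tgt_comp by exact H; reflexivity.
Defined.

Definition cG (S : Type) (s : S -> S) (Hs : forall x, s (s x) = x) : GpdG.
Proof.
  refine (Build_GpdG (cgpd S) (@cfun (cgpd S) S s) Hs _).
  intros [x y]; simpl; rewrite !Hs; reflexivity.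
Defined.

Definition cmor (A : GpdG) (S : Type) (s : S -> S) (Hs : forall x, s (s x) = x)
  (g : ob A -> S) (Hg : forall x, g (fo (@alpha A) x) = s (g x)) : GMor A (cG S s Hs).
Proof.
  refine (Build_GMor A (cG S s Hs) (@cfun A S g) Hg _).
  intros h; simpl. rewrite (fa_src _ _ (@alpha A)), (fa_tgt _ _ (@alpha A)), !Hg. reflexivity.
Defined.

Lemma cmor_tfib (S T : Type) (s : S -> S) (Hs : forall x, s (s x) = x)
  (t : T -> T) (Ht : forall x, t (t x) = x) (pi : S -> T)
  (Hpi : forall x, pi (s x) = t (pi x)) (Hsurj : forall y, exists x, pi x = y) :
  trivial_fibration (cmor (cG S s Hs) T t Ht pi Hpi).
Proof.
  split; [split; [split|]|].
  - intros [a b] [c d] H1 H2 _. simpl in *. subst. reflexivity.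
  - intros x y [g1 g2] H1 H2. exists (x, y). simpl in *. subst. auto.
  - intros b. destruct (Hsurj b) as [a Ha]. exists a, (b, b). simpl. auto.
  - intros a [g1 g2] H. simpl in *. destruct (Hsurj g2) as [a' Ha'].
    exists (a, a'). simpl. subst. auto.
Qed.
Lemma tc_to_lw (A B : GpdG) (f : GMor A B) :
  trivial_cofibration f -> levelwise_trivial_cofibration f /\ bij_fixed_points f.
Proof.
  intros [Hc Hw].
  assert (Hinj : inj_on_objects (gfun f)).
  { intros x y Hxy.
    set (X := cG (ob A) (fo (@alpha A)) (alpha_invol_o A)).
    set (Y := cG unit (fun u => u) (fun u => eq_refl)).
    set (p := cmor X unit (fun u => u) (fun u => eq_refl) (fun _ => tt) (fun _ => eq_refl)).
    assert (Hp : trivial_fibration p).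
    { apply cmor_tfib. intros []. exists x. reflexivity. }
    set (u := cmor A (ob A) (fo (@alpha A)) (alpha_invol_o A) (fun a => a) (fun _ => eq_refl)).
    set (v := cmor B unit (fun u => u) (fun u => eq_refl) (fun _ => tt) (fun _ => eq_refl)).
    destruct (Hc X Y p Hp u v (fun _ => eq_refl) (fun _ => eq_refl)) as [l [Hl1 _]].
    pose proof (f_equal (fo l) Hxy) as E. rewrite !Hl1 in E. exact E. }
  split; [split; assumption|].
  split.
  - intros x y _ _ H. exact (Hinj x y H).
  - intros b Hb. apply NNPP. intro Hn.
    set (Q := fun b0 : ob B => fixed_ob b0 /\ ~ exists a, fixed_ob a /\ fo f a = b0).
    set (s := fun be : ob B * bool => (fo (@alpha B) (fst be),
               if excluded_middle_informative (Q (fst be)) then negb (snd be) else snd be)).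
    assert (HQa : forall b0, Q (fo (@alpha B) b0) -> Q b0).
    { intros b0 [H1 H2]. unfold fixed_ob in H1. rewrite (alpha_invol_o B) in H1.
      assert (Hb0 : fo (@alpha B) b0 = b0) by (symmetry; exact H1).
      rewrite Hb0 in H2. split; [exact Hb0| exact H2]. }
    assert (Hs : forall x, s (s x) = x).
    { intros [b0 e]. unfold s; simpl. rewrite alpha_invol_o.
      destruct (excluded_middle_informative (Q b0)) as [q|q];
      destruct (excluded_middle_informative (Q (fo (@alpha B) b0))) as [q'|q'].
      - rewrite negb_involutive. reflexivity.
      - exfalso. apply q'. destruct q as [q1 q2]. unfold fixed_ob in q1. rewrite q1. split; assumption.
      - exfalso. apply q, HQa, q'.
      - reflexivity. }
    set (X := cG (ob B * bool) s Hs).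
    set (Y := cG (ob B) (fo (@alpha B)) (alpha_invol_o B)).
    set (p := cmor X (ob B) (fo (@alpha B)) (alpha_invol_o B) fst (fun _ => eq_refl)).
    assert (Hp : trivial_fibration p).
    { apply cmor_tfib. intros y. exists (y, true). reflexivity. }
    assert (Hu : forall a, (fo f (fo (@alpha A) a), true) = s (fo f a, true)).
    { intros a. unfold s; simpl. rewrite (gfun_o _ _ f).
      destruct (excluded_middle_informative (Q (fo f a))) as [[q1 q2]|q]; [|reflexivity].
      exfalso. apply q2. exists a. split; [|reflexivity].
      apply Hinj. unfold fixed_ob in *. rewrite (gfun_o _ _ f). exact q1. }
    set (u := cmor A (ob B * bool) s Hs (fun a => (fo f a, true)) Hu).
    set (v := cmor B (ob B) (fo (@alpha B)) (alpha_invol_o B) (fun b0 => b0) (fun _ => eq_refl)).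
    assert (Hca : forall h, fa p (fa u h) = fa v (fa f h)).
    { intros h. simpl. rewrite (fa_src _ _ f), (fa_tgt _ _ f). reflexivity. }
    destruct (Hc X Y p Hp u v (fun _ => eq_refl) Hca) as [l [_ [_ [Hl3 _]]]].
    pose proof (gfun_o _ _ l b) as Hg. pose proof (Hl3 b) as H3.
    unfold fixed_ob in Hb. rewrite Hb in Hg.
    revert Hg H3. generalize (fo l b). intros [b' e] Hg H3. simpl in H3. subst b'.
    cbn in Hg. unfold s in Hg. simpl in Hg.
    destruct (excluded_middle_informative (Q b)) as [q|q].
    + injection Hg as _ Hg. destruct e; discriminate.
    + apply q. split; [exact Hb|]. exact Hn.
Qed.
Lemma lw_to_cof (A B : GpdG) (f : GMor A B) :
  inj_on_objects (gfun f) -> bij_fixed_points f -> cofibration f.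
Proof.
  intros Hinj [_ Hbij] X Y p [[[Pfaith Pfull] Pess] Piso] u v Hco Hca.
  assert (Hs : forall c : ob B, exists x : ob X, fo p x = fo v c).
  { intro c. destruct (Pess (fo v c)) as [x0 [g [Hg1 Hg2]]].
    destruct (Piso x0 g Hg1) as [h [Hh1 Hh2]]. exists (tgt h).
    rewrite <- (fa_tgt _ _ p), Hh2. exact Hg2. }
  pose (xsel := fun c => proj1_sig (constructive_indefinite_description _ (Hs c))).
  assert (Hxsel : forall c, fo p (xsel c) = fo v c)
    by (intro c; exact (proj2_sig (constructive_indefinite_description _ (Hs c)))).
  clearbody xsel.
  pose (rep := fun b : ob B => epsilon (inhabits b) (fun y => y = b \/ y = fo (@alpha B) b)).
  assert (Hrep1 : forall b, rep b = b \/ rep b = fo (@alpha B) b).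
  { intro b. unfold rep. apply (epsilon_spec (inhabits b) (fun y => y = b \/ y = fo (@alpha B) b)).
    exists b. left. reflexivity. }
  assert (Hrep2 : forall b, rep (fo (@alpha B) b) = rep b).
  { intro b. unfold rep.
    replace (fun y => y = fo (@alpha B) b \/ y = fo (@alpha B) (fo (@alpha B) b))
      with (fun y => y = b \/ y = fo (@alpha B) b).
    - f_equal. apply proof_irrelevance.
    - apply functional_extensionality. intro y. apply propositional_extensionality.
      rewrite (alpha_invol_o B). tauto. }
  clearbody rep.
  pose (lo := fun b => match excluded_middle_informative (exists a, fo f a = b) with
    | left H => fo u (proj1_sig (constructive_indefinite_description _ H))
    | right _ => if excluded_middle_informative (rep b = b) then xsel b
                 else fo (@alpha X) (xsel (fo (@alpha B) b)) end).
  assert (Hlo_img : forall a, lo (fo f a) = fo u a).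
  { intro a. unfold lo. destruct (excluded_middle_informative _) as [H|H].
    - destruct (constructive_indefinite_description _ H) as [a' Ha']. simpl.
      rewrite (Hinj _ _ Ha'). reflexivity.
    - exfalso. apply H. exists a. reflexivity. }
  assert (Hnim : forall b, ~ (exists a, fo f a = b) ->
     lo b = if excluded_middle_informative (rep b = b) then xsel b
                 else fo (@alpha X) (xsel (fo (@alpha B) b))).
  { intros b H. unfold lo. destruct (excluded_middle_informative _) as [H'|H'].
    - contradiction. - reflexivity. }
  clearbody lo.
  assert (Hlo_p : forall b, fo p (lo b) = fo v b).
  { intro b. destruct (classic (exists a, fo f a = b)) as [[a <-]|H].
    - rewrite Hlo_img. apply Hco.
    - rewrite (Hnim b H). destruct (excluded_middle_informative (rep b = b)).
      + apply Hxsel.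
      + rewrite (gfun_o _ _ p), Hxsel, (gfun_o _ _ v), (alpha_invol_o Y).
        reflexivity. }
  assert (Hlo_a : forall b, lo (fo (@alpha B) b) = fo (@alpha X) (lo b)).
  { intro b. destruct (classic (exists a, fo f a = b)) as [[a <-]|H].
    - rewrite <- (gfun_o _ _ f), !Hlo_img. apply (gfun_o _ _ u).
    - assert (H2 : ~ exists a, fo f a = fo (@alpha B) b).
      { intros [a Ha]. apply H. exists (fo (@alpha A) a).
        rewrite (gfun_o _ _ f), Ha, (alpha_invol_o B). reflexivity. }
      assert (Hnf : fo (@alpha B) b <> b).
      { intro Hf. destruct (Hbij b Hf) as [a [_ Ha]]. apply H. exists a. exact Ha. }
      rewrite (Hnim b H), (Hnim _ H2), (Hrep2 b).
      destruct (excluded_middle_informative (rep b = b)) as [r|r];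
      destruct (excluded_middle_informative (rep b = fo (@alpha B) b)) as [r'|r'].
      + congruence.
      + rewrite (alpha_invol_o B). reflexivity.
      + rewrite (alpha_invol_o X). reflexivity.
      + destruct (Hrep1 b); contradiction. }
  assert (Hla : forall k : ar B, exists h, src h = lo (src k) /\ tgt h = lo (tgt k) /\ fa p h = fa v k).
  { intro k. apply Pfull; rewrite ?(fa_src _ _ v), ?(fa_tgt _ _ v), Hlo_p; reflexivity. }
  pose (la := fun k => proj1_sig (constructive_indefinite_description _ (Hla k))).
  assert (Hla_s : forall k, src (la k) = lo (src k) /\ tgt (la k) = lo (tgt k) /\ fa p (la k) = fa v k)
    by (intro k; exact (proj2_sig (constructive_indefinite_description _ (Hla k)))).
  clearbody la.
  assert (Huniq : forall k h, src h = lo (src k) -> tgt h = lo (tgt k) -> fa p h = fa v k -> h = la k).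
  { intros k h H1 H2 H3. destruct (Hla_s k) as [K1 [K2 K3]]. apply Pfaith; congruence. }
  assert (P1 : forall h, src (la h) = lo (src h)) by (intro h; apply Hla_s).
  assert (P2 : forall h, tgt (la h) = lo (tgt h)) by (intro h; apply Hla_s).
  assert (P3 : forall x, la (idn x) = idn (lo x)).
  { intro x. symmetry. apply Huniq.
    - rewrite !src_idn. reflexivity.
    - rewrite !tgt_idn. reflexivity.
    - rewrite (fa_idn _ _ p), Hlo_p, (fa_idn _ _ v). reflexivity. }
  assert (P4 : forall g h, tgt h = src g -> la (comp g h) = comp (la g) (la h)).
  { intros g h Hgh. assert (E : tgt (la h) = src (la g)) by (rewrite P1, P2, Hgh; reflexivity).
    symmetry. apply Huniq.
    - rewrite src_comp by exact E. rewrite src_comp by exact Hgh. apply P1.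
    - rewrite tgt_comp by exact E. rewrite tgt_comp by exact Hgh. apply P2.
    - rewrite (fa_comp _ _ p) by exact E. rewrite (fa_comp _ _ v) by exact Hgh.
      f_equal; apply Hla_s. }
  pose (lF := Build_Functor B X lo la P1 P2 P3 P4).
  assert (Q2 : forall k, fa lF (fa (@alpha B) k) = fa (@alpha X) (fa lF k)).
  { intro k. simpl. symmetry. apply Huniq.
    - rewrite (fa_src _ _ (@alpha X)), P1, <- Hlo_a, (fa_src _ _ (@alpha B)). reflexivity.
    - rewrite (fa_tgt _ _ (@alpha X)), P2, <- Hlo_a, (fa_tgt _ _ (@alpha B)). reflexivity.
    - rewrite (gfun_a _ _ p), (proj2 (proj2 (Hla_s k))), (gfun_a _ _ v). reflexivity. }
  exists (Build_GMor B X lF Hlo_a Q2).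
  split; [|split; [|split]]; simpl.
  - exact Hlo_img.
  - intro h. symmetry. apply Huniq.
    + rewrite (fa_src _ _ u), (fa_src _ _ f), Hlo_img. reflexivity.
    + rewrite (fa_tgt _ _ u), (fa_tgt _ _ f), Hlo_img. reflexivity.
    + apply Hca.
  - exact Hlo_p.
  - intro k. apply Hla_s.
Qed.

Lemma lw_to_iso (A B : GpdG) (f : GMor A B) :
  levelwise_trivial_cofibration f -> bij_fixed_points f ->
  iso_homotopy_fixed f /\ iso_full_fixed f.
Proof.
  intros [Hinj [[Ff Fu] _]] Hbij.
  pose proof Hbij as [_ Hsur].
  assert (Hfs : forall k : ar B, fixed_ar k -> fixed_ob (src k) /\ fixed_ob (tgt k)).
  { intros k Hk. unfold fixed_ar, fixed_ob in *.
    rewrite <- (fa_src _ _ (@alpha B)), <- (fa_tgt _ _ (@alpha B)), Hk. split; reflexivity. }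
  assert (Hinjar : forall h h', fa f h = fa f h' -> h = h').
  { intros h h' E. apply Ff; [| |exact E]; apply Hinj.
    - rewrite <- !(fa_src _ _ f), E. reflexivity.
    - rewrite <- !(fa_tgt _ _ f), E. reflexivity. }
  assert (Hsurk : forall k : ar B, fixed_ob (src k) -> fixed_ob (tgt k) ->
     exists h, fixed_ob (src h) /\ fixed_ob (tgt h) /\ fa f h = k).
  { intros k H1 H2. destruct (Hsur _ H1) as [a [Ha1 Ha2]].
    destruct (Hsur _ H2) as [a' [Ha1' Ha2']].
    destruct (Fu a a' k (eq_sym Ha2) (eq_sym Ha2')) as [h [E1 [E2 E3]]].
    exists h. rewrite E1, E2. auto. }
  split; split; [exact Hbij| |exact Hbij|]; split.
  - intros h h' _ _ E. exact (Hinjar h h' E).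
  - intros k Hk. destruct (Hfs k Hk) as [H1 H2].
    destruct (Hsurk k H1 H2) as [h [E1 [E2 E3]]]. exists h. split; [|exact E3].
    apply Hinjar. unfold fixed_ar. rewrite (gfun_a _ _ f), E3. exact Hk.
  - intros h h' _ _ _ _ E. exact (Hinjar h h' E).
  - exact Hsurk.
Qed.

Theorem proposition4p5 (A B : GpdG) (f : GMor A B) :
  (trivial_cofibration f <->
     levelwise_trivial_cofibration f /\ bij_fixed_points f) /\
  (trivial_cofibration f <->
     levelwise_trivial_cofibration f /\ iso_homotopy_fixed f) /\
  (trivial_cofibration f <->
     levelwise_trivial_cofibration f /\ iso_full_fixed f).
Proof.
  assert (H1 : levelwise_trivial_cofibration f /\ bij_fixed_points f -> trivial_cofibration f).
  { intros [[Hi Hw] Hb]. split; [apply lw_to_cof; assumption | exact Hw]. }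
  pose proof (tc_to_lw A B f) as H2.
  split; [|split]; split.
  - exact H2.
  - exact H1.
  - intro H. destruct (H2 H) as [Hl Hb]. split; [exact Hl|]. apply (lw_to_iso A B f Hl Hb).
  - intros [Hl [Hb _]]. apply H1. split; assumption.
  - intro H. destruct (H2 H) as [Hl Hb]. split; [exact Hl|]. apply (lw_to_iso A B f Hl Hb).
  - intros [Hl [Hb _]]. apply H1. split; assumption.
Qed.
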